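(* Let $G$ be a finite group, $A=\mathbb{C}[[z]]$ with maximal ideal $\mathfrak{m}=(z)$, and $\phi:G\to\Aut_{\mathbb{R}}(A)$ an injective group homomorphism. Then exactly one of the following holds. (a) Every $\phi_g$ is $\mathbb{C}$-linear. Then $G=\langle\varrho\mid\varrho^n=e\rangle$ is cyclic of some order $n$, and there is a local parameter $w\in\mathfrak{m}$ (generator of $\mathfrak{m}$) with $\phi_\varrho(w)=\xi w$, where $\xi=\exp(2\pi i/n)$. (b) Otherwise $G\cong D_n=\langle\sigma,\varrho\mid\sigma^2=e=\varrho^n,\ \sigma\varrho\sigma^{-1}=\varrho^{-1}\rangle$ for some $n\in\mathbb{N}$, and there is a local parameter $w\in\mathfrak{m}$ such that $\phi_\sigma(\alpha)=\bar\alpha$ for $\alpha\in\mathbb{C}$, $\phi_\sigma(w)=w$, $\phi_\varrho(\alpha)=\alpha$ for $\alpha\in\mathbb{C}$, and $\phi_\varrho(w)=\xi w$ with $\xi=\exp(2\pi i/n)$. *)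

(* Defs.v *)
From HB Require Import structures.
From mathcomp Require Import all_boot all_order all_algebra all_fingroup.
From mathcomp Require Import complex.
From mathcomp Require Import reals trigo.
Set Implicit Arguments. Unset Strict Implicit. Unset Printing Implicit Defensive.
Import Order.TTheory GRing.Theory Num.Theory.
Local Open Scope ring_scope.

Definition fps (R : realType) := nat -> R[i].

Section FPS.
Variable R : realType.

Definition fps_add (a b : fps R) : fps R := fun k => a k + b k.
Definition fps_mul (a b : fps R) : fps R :=
  fun k => \sum_(j < k.+1) a j * b (k - j)%N.
Definition fps_const (c : R[i]) : fps R := fun k => if k == 0%N then c else 0.
Definition fps_one : fps R := fps_const 1.

Definition in_max_ideal (a : fps R) : Prop := a 0%N = 0.

Definition local_parameter (w : fps R) : Prop :=
  in_max_ideal w /\ forall a, in_max_ideal a -> exists b, a = fps_mul b w.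

Definition is_R_aut (f : fps R -> fps R) : Prop :=
  [/\ bijective f,
      forall a b, f (fps_add a b) = fps_add (f a) (f b),
      forall a b, f (fps_mul a b) = fps_mul (f a) (f b),
      f fps_one = fps_one &
      forall (r : R) a, f (fps_mul (fps_const (Complex r 0)) a) = fps_mul (fps_const (Complex r 0)) (f a)].

Definition is_C_linear (f : fps R -> fps R) : Prop :=
  forall (c : R[i]) a, f (fps_mul (fps_const c) a) = fps_mul (fps_const c) (f a).

Definition xi_n (n : nat) : R[i] :=
  Complex (cos (2 * pi / n%:R)) (sin (2 * pi / n%:R)).

End FPS.

(* Main.v *)
Require Import Defs.
From HB Require Import structures.
From mathcomp Require Import all_boot all_order all_algebra all_fingroup all_solvable.
From mathcomp Require Import complex ring lra.
From mathcomp Require Import reals trigo.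
From Stdlib Require Import FunctionalExtensionality Classical.
Set Implicit Arguments. Unset Strict Implicit. Unset Printing Implicit Defensive.
Import Order.TTheory GRing.Theory Num.Theory.
Local Open Scope ring_scope.

Lemma fps_ext {R : realType} (a b : fps R) : (forall k, a k = b k) -> a = b.
Proof. move=> h; exact: functional_extensionality h. Qed.

Lemma mul_constl {R : realType} (c : R[i]) (a : fps R) :
  fps_mul (fps_const c) a = fun k => c * a k.
Proof.
apply: fps_ext => k; rewrite /fps_mul big_ord_recl /= subn0 /fps_const /=.
rewrite big1 ?addr0 // => j _; by rewrite /= mul0r.
Qed.

Lemma mul_constr {R : realType} (c : R[i]) (a : fps R) :
  fps_mul a (fps_const c) = fun k => a k * c.
Proof.
apply: fps_ext => k; rewrite /fps_mul big_ord_recr /= subnn /fps_const /=.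
rewrite big1 ?add0r // => j _; case: j => j /= hj.
by rewrite subn_eq0 leqNgt hj mulr0.
Qed.

Lemma fps_mul0 {R : realType} (a b : fps R) : fps_mul a b 0%N = a 0%N * b 0%N.
Proof. by rewrite /fps_mul big_ord_recl big_ord0 addr0. Qed.

Lemma fps_mul1 {R : realType} (a b : fps R) :
  fps_mul a b 1%N = a 0%N * b 1%N + a 1%N * b 0%N.
Proof. by rewrite /fps_mul !big_ord_recl big_ord0 addr0. Qed.

Definition shiftR {R : realType} (x : fps R) : fps R :=
  fun k => if k is k'.+1 then x k' else 0.

Lemma mul_shiftR {R : realType} (b x : fps R) :
  fps_mul b (shiftR x) = shiftR (fps_mul b x).
Proof.
apply: fps_ext => -[|k]; rewrite /fps_mul /shiftR.
  by rewrite big_ord_recl big_ord0 /= mulr0 addr0.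
rewrite big_ord_recr /= subnn mulr0 addr0; apply: eq_bigr => -[j hj] _ /=.
by rewrite subSn.
Qed.

Fixpoint dv {R : realType} (c u : fps R) (n k : nat) : R[i] :=
  match n with
  | 0 => c 0%N / u 0%N
  | n'.+1 => (c k - \sum_(j < k) dv c u n' j * u (k - j)%N) / u 0%N
  end.

Lemma dv_stable {R : realType} (c u : fps R) n0 k0 : (k0 <= n0)%N -> dv c u n0 k0 = dv c u k0 k0.
Proof.
suff H : forall N n k, (n <= N)%N -> (k <= n)%N -> dv c u n k = dv c u k k.
  by move=> hk; apply: (H n0).
elim=> [|N IH] n k hn hk.
  by case: n hn hk => // _; case: k.
case: n hn hk => [|n] hn hk.
  by case: k hk.
case: k hk => [|k] hk /=.
  by rewrite big_ord0 subr0.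
congr ((_ - _) / _); apply: eq_bigr => -[j hj] _ /=.
rewrite (IH n j) //; last exact: (leq_trans hj hk).
by rewrite (IH k j) //; exact: (leq_trans hk hn).
Qed.

Lemma fps_div {R : realType} (c u : fps R) : u 0%N != 0 ->
  exists b, fps_mul b u = c.
Proof.
move=> u0; exists (fun k => dv c u k k); apply: fps_ext => k.
rewrite /fps_mul big_ord_recr /= subnn.
case: k => [|k] /=.
  by rewrite big_ord0 add0r divfK.
rewrite divfK //.
have -> : \sum_(i < k.+1) dv c u i i * u (k.+1 - i)%N = \sum_(j < k.+1) dv c u k j * u (k.+1 - j)%N.
  by apply: eq_bigr => -[j hj] _ /=; rewrite dv_stable.
by rewrite addrC subrK.
Qed.

Lemma const_mul {R : realType} (c d : R[i]) :
  fps_mul (fps_const c) (fps_const d) = fps_const (c * d) :> fps R.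
Proof.
rewrite mul_constl; apply: fps_ext => k; rewrite /fps_const; case: (k == 0)%N => //.
by rewrite mulr0.
Qed.

Lemma const_add {R : realType} (c d : R[i]) :
  fps_add (fps_const c) (fps_const d) = fps_const (c + d) :> fps R.
Proof.
apply: fps_ext => k; rewrite /fps_add /fps_const; case: (k == 0)%N => //.
by rewrite addr0.
Qed.

Lemma mul_one {R : realType} (a : fps R) : fps_mul a (fps_one R) = a.
Proof. by rewrite /fps_one mul_constr; apply: fps_ext => k; rewrite mulr1. Qed.

Lemma sqrtm1 {R : realType} (x : fps R) : fps_mul x x = fps_const (-1) ->
  x = fps_const (x 0%N) /\ x 0%N ^+ 2 = -1.
Proof.
move=> hx.
have h0 : x 0%N ^+ 2 = -1 by rewrite expr2 -fps_mul0 hx.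
have x0n : x 0%N != 0.
  by apply/eqP => e; move: h0; rewrite e expr2 mulr0 => /eqP; rewrite eq_sym oppr_eq0 oner_eq0.
split=> //.
suff H : forall k j, (0 < j <= k)%N -> x j = 0.
  apply: fps_ext => -[|j]; rewrite /fps_const //=.
  by apply: (H j.+1); rewrite /= leqnn.
elim=> [|k IH] j /andP[j0 jk]; first by case: j j0 jk.
rewrite leq_eqVlt in jk; case/orP: jk => [/eqP -> | jk]; last by apply: IH; rewrite j0.
have := congr1 (fun a => a k.+1) hx; rewrite /fps_mul /fps_const /=.
rewrite big_ord_recl big_ord_recr /= subn0 subnn.
rewrite big1; last first.
  move=> [i hi] _ /=; rewrite /bump /=.
  by rewrite IH ?mul0r // add1n ltnS /= hi.
rewrite add0r => /eqP; rewrite mulrC -mulr2n -mulrnAl mulf_eq0 (negbTE x0n) /= .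
by rewrite mulrn_eq0 /= orbF => /eqP.
Qed.

Ltac cplx := apply/eqP; rewrite eq_complex /=; apply/andP; split; apply/eqP; ring.

Lemma aut_constR {R : realType} (f : fps R -> fps R) (hf : is_R_aut f) (r : R) :
  f (fps_const (Complex r 0)) = fps_const (Complex r 0).
Proof.
case: hf => _ _ _ f1 fR.
by have := fR r (fps_one R); rewrite f1 !mul_one.
Qed.

Lemma aut_const {R : realType} (f : fps R -> fps R) (hf : is_R_aut f) :
  (forall c, f (fps_const c) = fps_const c) \/
  (forall c, f (fps_const c) = fps_const (conjc c)).
Proof.
have hf' := hf; case: hf' => _ fA fM _ _.
have hi : fps_mul (f (fps_const 'i%C)) (f (fps_const 'i%C)) = fps_const (-1).
  rewrite -fM const_mul.
  have -> : ('i%C * 'i%C : R[i]) = Complex (-1) 0 by cplx.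
  rewrite aut_constR //; congr fps_const; cplx.
have [e1 e2] := sqrtm1 hi.
set x := f (fps_const 'i%C) 0%N in e1 e2.
have : (x - 'i%C) * (x + 'i%C) = 0.
  have -> : (x - 'i%C) * (x + 'i%C) = x ^+ 2 - 'i%C * 'i%C by ring.
  rewrite e2; cplx.
move/eqP; rewrite mulf_eq0 => /orP[]; rewrite ?subr_eq0 ?addr_eq0 => /eqP ex;
  [left | right] => -[a b];
  (have -> : Complex a b = Complex a 0 + Complex b 0 * 'i%C by cplx);
  rewrite -const_add -const_mul fA fM !aut_constR // e1 ex const_mul const_add;
  congr fps_const; cplx.
Qed.

Definition zz (R : realType) : fps R := shiftR (fps_one R).

Lemma lp_of {R : realType} (w : fps R) : w 0%N = 0 -> w 1%N != 0 -> local_parameter w.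
Proof.
move=> w0 w1; split=> // a a0.
have [b hb] := fps_div (fun k => a k.+1) (u := fun k => w k.+1) w1.
exists b.
have -> : w = shiftR (fun k => w k.+1) by apply: fps_ext => -[|k].
rewrite mul_shiftR hb; apply: fps_ext => -[|k] //.
Qed.

Lemma lp_1 {R : realType} (w : fps R) : local_parameter w -> w 1%N != 0.
Proof.
case=> w0 h; have [b hb] := h (zz R) (erefl _).
have := congr1 (fun a => a 1%N) hb; rewrite /= fps_mul1 w0 mulr0 addr0.
move=> e; apply/eqP => w1; move: e; rewrite w1 mulr0 /zz /shiftR /fps_one /fps_const /=.
by move/eqP; rewrite oner_eq0.
Qed.

Lemma zz_lp {R : realType} : local_parameter (zz R).
Proof. by apply: lp_of => //=; rewrite /zz /shiftR /fps_one /fps_const /= oner_neq0. Qed.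

Lemma aut0 {R : realType} (f : fps R -> fps R) (hf : is_R_aut f) :
  f (fps_const 0) = fps_const 0.
Proof. by case: (aut_const hf) => ->; rewrite ?conjc0. Qed.

Lemma aut_surj_const {R : realType} (f : fps R -> fps R) (hf : is_R_aut f) c :
  exists d, f (fps_const d) = fps_const c.
Proof.
case: (aut_const hf) => h; first by exists c.
by exists (conjc c); rewrite h conjcK.
Qed.

Lemma aut_m {R : realType} (f : fps R -> fps R) (hf : is_R_aut f) (a : fps R) :
  a 0%N = 0 -> f a 0%N = 0.
Proof.
move=> a0; apply/eqP/negPn/negP => cn0.
set c := f a 0%N in cn0.
have [d hd] := aut_surj_const hf c.
have dn0 : d != 0.
  apply: contraNneq cn0 => d0; move: hd; rewrite d0 aut0 // => /(congr1 (fun x => x 0%N)).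
  by rewrite /fps_const /= => <-.
pose x : fps R := fun k => a k - fps_const d k.
have x0 : x 0%N != 0 by rewrite /x a0 /fps_const /= sub0r oppr_eq0.
have [y hy] := fps_div (fps_one R) x0.
have ea : a = fps_add x (fps_const d) by apply: fps_ext => k; rewrite /fps_add /x subrK.
case: hf => _ fA fM f1 _.
have fx0 : f x 0%N = 0.
  have := congr1 (fun u => u 0%N) (fA x (fps_const d)); rewrite -ea hd /fps_add /fps_const /=.
  by rewrite -/c => /eqP; rewrite -subr_eq subrr eq_sym => /eqP.
have := congr1 (fun u => u 0%N) (fM y x); rewrite hy f1 fps_mul0 fx0 mulr0.
by rewrite /fps_one /fps_const /= => /eqP; rewrite oner_eq0.
Qed.

Lemma aut_lin1 {R : realType} (f : fps R -> fps R) (hf : is_R_aut f) (e : R[i] -> R[i])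
  (he : forall c, f (fps_const c) = fps_const (e c)) (a : fps R) :
  f a 1%N = e (a 1%N) * f (zz R) 1%N.
Proof.
have hf' := hf; case: hf' => _ fA fM _ _.
have fz0 : f (zz R) 0%N = 0 by apply: aut_m.
have [_ hz] := @zz_lp R.
have [b hb] := hz (fun k => a k - fps_const (a 0%N) k) ltac:(by rewrite /in_max_ideal /fps_const /= subrr).
have [b' hb'] := hz (fun k => b k - fps_const (b 0%N) k) ltac:(by rewrite /in_max_ideal /fps_const /= subrr).
have ea : a = fps_add (fps_const (a 0%N)) (fps_mul (fps_add (fps_const (b 0%N)) (fps_mul b' (zz R))) (zz R)).
  rewrite -hb'; have -> : fps_add (fps_const (b 0%N)) (fun k => b k - fps_const (b 0%N) k) = b.
    by apply: fps_ext => k; rewrite /fps_add addrC subrK.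
  by rewrite -hb; apply: fps_ext => k; rewrite /fps_add addrC subrK.
have b0 : b 0%N = a 1%N.
  have := congr1 (fun u => u 1%N) hb; rewrite /= fps_mul1 /zz /shiftR /fps_one /fps_const /=.
  by rewrite mulr1 mulr0 addr0 subr0.
rewrite {1}ea fA !fM fA !fM !he /fps_add fps_mul1 fps_mul0 fz0 /fps_const /= b0.
by rewrite !mulr0 !addr0 add0r.
Qed.

Lemma aut_id {R : realType} (f : fps R -> fps R) (hf : is_R_aut f)
  (he : forall c, f (fps_const c) = fps_const c) (w : fps R) (hw : local_parameter w)
  (fw : f w = w) : forall a, f a = a.
Proof.
have hf' := hf; case: hf' => _ fA fM _ _.
case: hw => w0 hw.
suff H : forall k a j, (j < k)%N -> f a j = a j.
  by move=> a; apply: fps_ext => j; apply: (H j.+1).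
elim=> [|k IH] a j // hj.
have [b hb] := hw (fun k => a k - fps_const (a 0%N) k) ltac:(by rewrite /in_max_ideal /fps_const /= subrr).
have ea : a = fps_add (fps_const (a 0%N)) (fps_mul b w).
  by rewrite -hb; apply: fps_ext => i; rewrite /fps_add addrC subrK.
rewrite ea fA fM he fw /fps_add; congr (_ + _).
rewrite /fps_mul; case: j hj => [|j] hj.
  by rewrite !big_ord_recl !big_ord0 w0 !mulr0.
rewrite big_ord_recr [RHS]big_ord_recr /= subnn w0 !mulr0 !addr0; apply: eq_bigr => -[i hi] _ /=.
by rewrite IH // (leq_trans hi).
Qed.

Local Open Scope group_scope.

Lemma gen_pair_join (gT : finGroupType) (x y : gT) :
  <[x]> <*> <[y]> = <<[set x; y]>>.
Proof. by rewrite joing_idl joing_idr. Qed.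

Lemma dihedral_hom (gT : finGroupType) (s r : gT) n :
  s ^+ 2 = 1 -> r ^+ n = 1 -> s * r * s^-1 = r^-1 -> <<[set s; r]>> = [set: gT] ->
  [set: gT]%G \homg Grp (s : r : (s ^+ 2, r ^+ n, s * r * s^-1 = r^-1)).
Proof.
move=> s2 rn srs gen; apply/existsP; exists (s, r); rewrite /= !xpair_eqE.
by rewrite gen_pair_join gen s2 rn srs !eqxx.
Qed.

Lemma pres_swap (rT : finGroupType) (H : {group rT}) n :
  (H \homg Grp (s : r : (s ^+ 2, r ^+ n, s * r * s^-1 = r^-1))) =
  (H \homg Grp (x : y : (x ^+ n, y ^+ 2, x ^ y = x^-1))).
Proof.
apply/existsP/existsP => -[[a b]] /=; rewrite !xpair_eqE => /and4P[/eqP e1 /eqP e2 /eqP e3 /eqP e4].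
  exists (b, a); rewrite /= !xpair_eqE.
  rewrite gen_pair_join setUC -gen_pair_join e1 e2 e3 eqxx /=.
  have ai : a^-1 = a by apply/eqP; rewrite eq_invg_mul -[a * a]/(a ^+ 2) e2.
  by rewrite /conjg !eqxx /= -e4 ai mulgA.
exists (b, a); rewrite /= !xpair_eqE.
rewrite gen_pair_join setUC -gen_pair_join e1 e2 e3 eqxx /=.
have bi : b^-1 = b by apply/eqP; rewrite eq_invg_mul -[b * b]/(b ^+ 2) e3.
by rewrite !eqxx /= -e4 /conjg !bi mulgA.
Qed.

Lemma dihedral_iso (gT : finGroupType) (s r : gT) n :
  (0 < n)%N -> s ^+ 2 = 1 -> r ^+ n = 1 -> s * r * s^-1 = r^-1 -> <<[set s; r]>> = [set: gT] ->
  #|[set: gT]| = n.*2 ->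
  [set: gT]%G \isog Grp (s : r : (s ^+ 2, r ^+ n, s * r * s^-1 = r^-1)).
Proof.
move=> n0 s2 rn srs gen card.
have hG := dihedral_hom s2 rn srs gen.
case: n n0 rn srs hG card => // -[|q] _ rn srs hG card.
  have r1 : r = 1 by rewrite -rn expg1.
  apply: intro_isoGrp => // rT H /existsP[[a b]] /=; rewrite !xpair_eqE.
  case/and4P=> /eqP e1 /eqP e2 /eqP e3 /eqP e4.
  have b1 : b = 1 by rewrite -e3 expg1.
  have G1 : [set: gT] = <[s]>.
    by rewrite -gen -gen_pair_join r1 cycle1 joingG1.
  have os : #[s] = 2 by rewrite orderE -G1 card.
  have dv : (#[a] %| #[s])%N by rewrite os order_dvdn e2.
  rewrite G1; apply/homgP; exists (eltm_morphism dv).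
  by rewrite im_eltm -e1 b1 cycle1 joingG1.
have q1 : (1 < q.+2)%N by [].
have isoD := Grp_dihedral q1.
have GD : [set: gT]%G \isog 'D_(q.+2).*2.
  apply/(isoGrpP _ isoD); split; first by rewrite card_dihedral.
  by rewrite -pres_swap.
move=> rT H; rewrite (eq_homgr _ GD) isoD pres_swap //.
Qed.

Local Close Scope group_scope.
Local Open Scope ring_scope.

Lemma prim_of2 (F : comNzRingType) (z : F) n : (0 < n)%N -> z ^+ n = 1 ->
  (forall k, (0 < k < n)%N -> z ^+ k != 1) -> n.-primitive_root z.
Proof.
move=> n0 zn hk; rewrite /primitive_root_of_unity n0 /=; apply/forallP => -[i hi] /=.
rewrite unity_rootE; case: (ltngtP i.+1 n) => h.
- by rewrite (negbTE (hk i.+1 h)).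
- by rewrite ltnS leqNgt hi in h.
- by rewrite h zn !eqxx.
Qed.

Lemma xi_pow (R : realType) n k : xi_n R n ^+ k =
  Complex (cos (k%:R * (2 * pi / n%:R))) (sin (k%:R * (2 * pi / n%:R))).
Proof.
elim: k => [|k IH]; first by rewrite expr0 mul0r cos0 sin0.
rewrite exprSr IH /xi_n; set t := 2 * pi / n%:R.
have -> : (k.+1%:R * t) = k%:R * t + t by rewrite mulrSr mulrDl mul1r.
apply/eqP; rewrite eq_complex /= cosD sinD; apply/andP; split; apply/eqP; ring.
Qed.

Lemma sin_cos_ne1 (R : realType) (x : R) : 0 < x < pi *+ 2 -> Complex (cos x) (sin x) != 1.
Proof.
move=> /andP[x0 x2]; apply/negP => /eqP[c1 s0].
case: (ltgtP x pi) => h.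
- by have := sin_gt0_pi (x := x); rewrite x0 h s0 ltxx => /(_ isT).
- have : 0 < sin (x - pi) by apply: sin_gt0_pi; rewrite subr_gt0 h /= ltrBlDr -mulr2n.
  by rewrite sinB cospi sinpi s0 c1 !mulr0 mul0r subr0 ltxx.
- move: c1; rewrite h cospi => e; lra.
Qed.

Lemma xi_prim (R : realType) n : (0 < n)%N -> n.-primitive_root (xi_n R n).
Proof.
move=> n0; have nR : (n%:R : R) != 0 by rewrite pnatr_eq0 -lt0n.
apply: prim_of2 => //.
  rewrite xi_pow; have -> : n%:R * (2 * pi / n%:R) = pi *+ 2 :> R by rewrite mulrCA divff // mulr1 mulr_natl.
  by rewrite cos2pi sin2pi.
move=> k /andP[k0 kn]; rewrite xi_pow; apply: sin_cos_ne1.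
have pi0 := @pi_gt0 R.
have -> : k%:R * (2 * pi / n%:R) = (2 * pi) * (k%:R / n%:R) :> R by ring.
have -> : pi *+ 2 = (2 * pi) * 1 :> R by rewrite mulr1 mulr2n -mulr2n mulr_natl.
have p2 : 0 < 2 * pi :> R by rewrite mulr_gt0.
rewrite ltr_pM2l // ltr_pdivrMr ?ltr0n // mul1r ltr_nat kn andbT.
by rewrite mulr_gt0 // divr_gt0 ?ltr0n.
Qed.

Lemma xi_conj (R : realType) n : xi_n R n * conjc (xi_n R n) = 1.
Proof.
rewrite /xi_n; set t := 2 * pi / n%:R.
have h := cos2Dsin2 t.
apply/eqP; rewrite eq_complex /=; apply/andP; split; apply/eqP.
  by rewrite -h; ring.
ring.
Qed.

Lemma conji_neq (R : realType) : conjc ('i%C : R[i]) != 'i%C.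
Proof. rewrite eq_complex /= eqxx /=; apply/negP => /eqP e; lra. Qed.

Definition inH (R : realType) (gT : finGroupType) (phi : gT -> fps R -> fps R) g :=
  (phi g (fps_const 'i%C) 0%N == 'i%C).

Definition eps (R : realType) (gT : finGroupType) (phi : gT -> fps R -> fps R) g (c : R[i]) :=
  if inH phi g then c else conjc c.

Definition LL (R : realType) (gT : finGroupType) (phi : gT -> fps R -> fps R) g :=
  phi g (zz R) 1%N.

Lemma phi_const (R : realType) (gT : finGroupType) (phi : gT -> fps R -> fps R)
  (pa : forall g, is_R_aut (phi g)) g c :
  phi g (fps_const c) = fps_const (eps phi g c).
Proof.
rewrite /eps /inH; case: (aut_const (pa g)) => h; rewrite !h /fps_const /=.
  by rewrite eqxx.
by rewrite (negbTE (conji_neq R)).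
Qed.

Lemma phi1 (R : realType) (gT : finGroupType) (phi : gT -> fps R -> fps R)
  (pa : forall g, is_R_aut (phi g)) (ph : forall g h, phi (g * h)%g = phi g \o phi h) :
  forall a, phi 1%g a = a.
Proof.
move=> a; case: (pa 1%g) => /bij_inj inj _ _ _ _.
apply: inj; have := congr1 (fun f => f a) (ph 1%g 1%g); rewrite mulg1 /= => <-.
by [].
Qed.

Lemma inH_mul (R : realType) (gT : finGroupType) (phi : gT -> fps R -> fps R)
  (pa : forall g, is_R_aut (phi g)) (ph : forall g h, phi (g * h)%g = phi g \o phi h) g h :
  inH phi (g * h)%g = (inH phi g == inH phi h).
Proof.
have e : eps phi (g * h)%g 'i%C = eps phi g (eps phi h 'i%C).
  have := congr1 (fun a => a 0%N) (phi_const pa (g * h)%g 'i%C).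
  by rewrite ph /= !phi_const // /fps_const /= => ->.
move: e; rewrite /eps.
case: (inH phi (g * h)%g); case: (inH phi g); case: (inH phi h) => //= /eqP;
  rewrite ?conjcK ?eqxx //.
- by rewrite eq_sym (negbTE (conji_neq R)).
- by rewrite eq_sym (negbTE (conji_neq R)).
- by rewrite (negbTE (conji_neq R)).
- by rewrite eq_complex /= => /andP[_ /eqP e]; exfalso; lra.
Qed.

Lemma eps_in (R : realType) (gT : finGroupType) (phi : gT -> fps R -> fps R) g c :
  inH phi g -> eps phi g c = c.
Proof. by rewrite /eps => ->. Qed.

Lemma eps_out (R : realType) (gT : finGroupType) (phi : gT -> fps R -> fps R) g c :
  ~~ inH phi g -> eps phi g c = conjc c.
Proof. by rewrite /eps => /negbTE ->. Qed.

Lemma LL_mul (R : realType) (gT : finGroupType) (phi : gT -> fps R -> fps R)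
  (pa : forall g, is_R_aut (phi g)) (ph : forall g h, phi (g * h)%g = phi g \o phi h) g h :
  LL phi (g * h)%g = eps phi g (LL phi h) * LL phi g.
Proof.
rewrite /LL ph /=; apply: (aut_lin1 (pa g)) => c; exact: phi_const.
Qed.

Lemma LL_neq0 (R : realType) (gT : finGroupType) (phi : gT -> fps R -> fps R)
  (pa : forall g, is_R_aut (phi g)) g : LL phi g != 0.
Proof.
have [[h hK Kh] _ _ _ _] := pa g.
have := aut_lin1 (pa g) (phi_const pa g) (h (zz R)); rewrite Kh /LL.
rewrite /zz /shiftR /fps_one /fps_const /= => e; apply/eqP => e0; move: e.
by rewrite e0 mulr0 => /eqP; rewrite oner_eq0.
Qed.

Lemma LL1 (R : realType) (gT : finGroupType) (phi : gT -> fps R -> fps R)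
  (pa : forall g, is_R_aut (phi g)) (ph : forall g h, phi (g * h)%g = phi g \o phi h) :
  LL phi 1%g = 1.
Proof. by rewrite /LL phi1. Qed.

Lemma inH1 (R : realType) (gT : finGroupType) (phi : gT -> fps R -> fps R)
  (pa : forall g, is_R_aut (phi g)) (ph : forall g h, phi (g * h)%g = phi g \o phi h) :
  inH phi 1%g.
Proof. by rewrite /inH phi1 /fps_const /=. Qed.

Lemma Hgroup (R : realType) (gT : finGroupType) (phi : gT -> fps R -> fps R)
  (pa : forall g, is_R_aut (phi g)) (ph : forall g h, phi (g * h)%g = phi g \o phi h) :
  group_set [set g | inH phi g].
Proof.
apply/group_setP; split; first by rewrite inE inH1.
by move=> x y; rewrite !inE inH_mul // => -> ->.
Qed.

Lemma aut_sum (R : realType) (f : fps R -> fps R) (hf : is_R_aut f)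
  (he : forall c, f (fps_const c) = fps_const c) (I : Type) (s : seq I) (P : pred I)
  (c : I -> R[i]) (F : I -> fps R) :
  f (fun k => \sum_(i <- s | P i) c i * F i k) = fun k => \sum_(i <- s | P i) c i * f (F i) k.
Proof.
have hf' := hf; case: hf' => _ fA fM _ _.
elim: s => [|x s IH].
  rewrite (_ : (fun k => \sum_(i <- [::] | P i) c i * F i k) = fps_const 0).
    by rewrite he; apply: fps_ext => k; rewrite big_nil /fps_const; case: (k == 0)%N.
  by apply: fps_ext => k; rewrite big_nil /fps_const; case: (k == 0)%N.
have -> : (fun k => \sum_(i <- x :: s | P i) c i * F i k) =
  (if P x then fps_add (fps_mul (fps_const (c x)) (F x)) (fun k => \sum_(j <- s | P j) c j * F j k)
   else (fun k => \sum_(j <- s | P j) c j * F j k)).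
  by apply: fps_ext => k; rewrite big_cons; case: (P x); rewrite ?mul_constl.
apply: fps_ext => k; rewrite big_cons.
case: (P x); last by rewrite IH.
by rewrite fA fM he mul_constl IH.
Qed.

Definition HH (R : realType) (gT : finGroupType) (phi : gT -> fps R -> fps R) :=
  [set g | inH phi g].

Definition w0 (R : realType) (gT : finGroupType) (phi : gT -> fps R -> fps R) : fps R :=
  fun k => \sum_(h in HH phi) (LL phi h)^-1 * phi h (zz R) k.

Lemma LLV (R : realType) (gT : finGroupType) (phi : gT -> fps R -> fps R)
  (pa : forall g, is_R_aut (phi g)) (ph : forall g h, phi (g * h)%g = phi g \o phi h) g :
  inH phi g -> LL phi (g^-1)%g = (LL phi g)^-1.
Proof.
move=> hg.
have := LL_mul pa ph (g^-1)%g g; rewrite mulVg LL1 //.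
have hgi : inH phi (g^-1)%g.
  have := inH_mul pa ph (g^-1)%g g; rewrite mulVg inH1 // hg.
  by case: (inH phi (g^-1)%g).
rewrite eps_in // => e; apply/eqP; rewrite eq_sym -(mulr1 (LL phi g)^-1) e.
by rewrite mulKf ?LL_neq0.
Qed.

Lemma inHV (R : realType) (gT : finGroupType) (phi : gT -> fps R -> fps R)
  (pa : forall g, is_R_aut (phi g)) (ph : forall g h, phi (g * h)%g = phi g \o phi h) g :
  inH phi (g^-1)%g = inH phi g.
Proof.
have := inH_mul pa ph (g^-1)%g g; rewrite mulVg inH1 //.
by case: (inH phi (g^-1)%g); case: (inH phi g).
Qed.

Lemma w0_eig (R : realType) (gT : finGroupType) (phi : gT -> fps R -> fps R)
  (pa : forall g, is_R_aut (phi g)) (ph : forall g h, phi (g * h)%g = phi g \o phi h) g :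
  inH phi g -> phi g (w0 phi) = fun k => LL phi g * w0 phi k.
Proof.
move=> hg.
have he : forall c, phi g (fps_const c) = fps_const c.
  by move=> c; rewrite phi_const // eps_in.
rewrite /w0 (aut_sum (pa g) he); apply: fps_ext => k.
rewrite mulr_sumr (reindex_inj (mulgI (g^-1)%g)) /=.
apply: eq_big => [j|j hj].
  by rewrite !inE inH_mul // inHV // hg.
have e : phi g (phi (g^-1 * j)%g (zz R)) = phi j (zz R) by rewrite -{2}(mulKVg g j) (ph g).
rewrite e.
have hj' : inH phi j.
  by move: hj; rewrite !inE inH_mul // inHV // hg; case: (inH phi j).
rewrite LL_mul // eps_in ?inHV // LLV // invfM invrK mulrA [_ * LL phi g]mulrC.
by [].
Qed.

Lemma w0_0 (R : realType) (gT : finGroupType) (phi : gT -> fps R -> fps R)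
  (pa : forall g, is_R_aut (phi g)) : w0 phi 0%N = 0.
Proof. by rewrite /w0 big1 // => h _; rewrite (aut_m (pa h)) ?mulr0. Qed.

Lemma w0_1 (R : realType) (gT : finGroupType) (phi : gT -> fps R -> fps R)
  (pa : forall g, is_R_aut (phi g)) : w0 phi 1%N = #|HH phi|%:R.
Proof.
rewrite /w0 (eq_bigr (fun _ => 1)) ?sumr_const // => h _.
by rewrite mulVf // LL_neq0.
Qed.

Lemma HH_gt0 (R : realType) (gT : finGroupType) (phi : gT -> fps R -> fps R)
  (pa : forall g, is_R_aut (phi g)) (ph : forall g h, phi (g * h)%g = phi g \o phi h) :
  (0 < #|HH phi|)%N.
Proof. by apply/card_gt0P; exists 1%g; rewrite inE inH1. Qed.

Lemma w0_lp (R : realType) (gT : finGroupType) (phi : gT -> fps R -> fps R)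
  (pa : forall g, is_R_aut (phi g)) (ph : forall g h, phi (g * h)%g = phi g \o phi h) :
  local_parameter (w0 phi).
Proof.
apply: lp_of; first exact: w0_0.
by rewrite w0_1 // pnatr_eq0 -lt0n HH_gt0.
Qed.

Lemma LL_inj1 (R : realType) (gT : finGroupType) (phi : gT -> fps R -> fps R)
  (pa : forall g, is_R_aut (phi g)) (ph : forall g h, phi (g * h)%g = phi g \o phi h)
  (pi : injective phi) g :
  inH phi g -> LL phi g = 1 -> g = 1%g.
Proof.
move=> hg L1.
have he : forall c, phi g (fps_const c) = fps_const c.
  by move=> c; rewrite phi_const // eps_in.
have fw : phi g (w0 phi) = w0 phi.
  by rewrite w0_eig // L1; apply: fps_ext => k; rewrite mul1r.
have idg := aut_id (pa g) he (w0_lp pa ph) fw.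
apply: pi; apply: functional_extensionality => a.
by rewrite idg phi1.
Qed.

Lemma LL_morph (R : realType) (gT : finGroupType) (phi : gT -> fps R -> fps R)
  (pa : forall g, is_R_aut (phi g)) (ph : forall g h, phi (g * h)%g = phi g \o phi h) u v :
  inH phi u -> LL phi (u * v)%g = LL phi u * LL phi v.
Proof. by move=> hu; rewrite LL_mul // eps_in // mulrC. Qed.

Lemma LL_X (R : realType) (gT : finGroupType) (phi : gT -> fps R -> fps R)
  (pa : forall g, is_R_aut (phi g)) (ph : forall g h, phi (g * h)%g = phi g \o phi h) y k :
  inH phi y -> LL phi (y ^+ k)%g = LL phi y ^+ k.
Proof.
move=> hy; elim: k => [|k IH]; first by rewrite expg0 LL1.
by rewrite expgS LL_morph // IH exprS.
Qed.

Lemma rho_exists (R : realType) (gT : finGroupType) (phi : gT -> fps R -> fps R)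
  (pa : forall g, is_R_aut (phi g)) (ph : forall g h, phi (g * h)%g = phi g \o phi h)
  (pi : injective phi) :
  exists rho, [/\ inH phi rho, <[rho]>%g = HH phi, #[rho]%g = #|HH phi| &
     LL phi rho = xi_n R #|HH phi|].
Proof.
set HG := Group (Hgroup pa ph).
have memHG y : (y \in HG) = inH phi y by rewrite inE.
have cyc : cyclic HG.
  apply: (@field_mul_group_cyclic _ _ _ (LL phi)).
    by move=> u v; rewrite memHG => hu _; exact: LL_morph.
  move=> y; rewrite memHG => hy; split; first exact: LL_inj1.
  by move=> ->; rewrite LL1.
case/cyclicP: cyc => x defH.
set n := #|HH phi|.
have ox : #[x]%g = n by rewrite orderE -defH.
have hx : inH phi x by rewrite -memHG defH cycle_id.
have n0 : (0 < n)%N by apply: HH_gt0.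
have primx : n.-primitive_root (LL phi x).
  apply: prim_of2 => //.
    by rewrite -LL_X // -ox expg_order LL1.
  move=> k /andP[k0 kn]; rewrite -LL_X //; apply/eqP => e.
  have hxk : inH phi (x ^+ k)%g by rewrite -memHG groupX // memHG.
  have := LL_inj1 pa ph pi hxk e.
  move/eqP; rewrite -order_dvdn ox => /dvdn_leq => /(_ k0).
  by rewrite leqNgt kn.
have [i ei] := prim_rootP primx (prim_expr_order (xi_prim R n0)).
exists (x ^+ i)%g.
have hr : inH phi (x ^+ i)%g by rewrite -memHG groupX // memHG.
have Lr : LL phi (x ^+ i)%g = xi_n R n by rewrite LL_X // ei.
have ordr : #[x ^+ i]%g = n.
  have key k : (#[x ^+ i]%g %| k)%N = (n %| k)%N.
    rewrite order_dvdn (prim_order_dvd (xi_prim R n0)) -Lr -LL_X //.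
    apply/eqP/eqP => [-> | e]; first exact: LL1.
    by apply: LL_inj1 => //; rewrite -memHG groupX // memHG.
  by apply/eqP; rewrite eqn_dvd key dvdnn -key dvdnn.
split=> //.
apply/eqP; rewrite eqEcard -orderE ordr leqnn andbT.
by rewrite -[HH phi]/(gval HG) cycle_subG memHG.
Qed.

Lemma LL_inj (R : realType) (gT : finGroupType) (phi : gT -> fps R -> fps R)
  (pa : forall g, is_R_aut (phi g)) (ph : forall g h, phi (g * h)%g = phi g \o phi h)
  (pi : injective phi) u v :
  inH phi u -> inH phi v -> LL phi u = LL phi v -> u = v.
Proof.
move=> hu hv e.
have hvi : inH phi (v^-1)%g by rewrite inHV.
have : (u * v^-1)%g = 1%g.
  apply: LL_inj1 => //; first by rewrite inH_mul // hu hvi.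
  by rewrite LL_morph // LLV // e mulfV // LL_neq0.
by move/eqP; rewrite -eq_mulgV1 => /eqP.
Qed.

Lemma phi_scale (R : realType) (gT : finGroupType) (phi : gT -> fps R -> fps R)
  (pa : forall g, is_R_aut (phi g)) g c a :
  phi g (fun k => c * a k) = fun k => eps phi g c * phi g a k.
Proof.
have [_ _ fM _ _] := pa g.
by rewrite -mul_constl fM phi_const // mul_constl.
Qed.

Lemma phi_comp (R : realType) (gT : finGroupType) (phi : gT -> fps R -> fps R)
  (ph : forall g h, phi (g * h)%g = phi g \o phi h) g h a :
  phi g (phi h a) = phi (g * h)%g a.
Proof. by rewrite ph. Qed.

Theorem proposition6p1 (R : realType) (gT : finGroupType)
    (phi : gT -> (fps R -> fps R))
    (phi_aut : forall g, is_R_aut (phi g))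
    (phi_hom : forall g h, phi (g * h)%g = phi g \o phi h)
    (phi_inj : injective phi) :
  ((forall g, is_C_linear (phi g)) /\
   exists (n : nat) (rho : gT),
     [/\ <[rho]>%g = [set: gT], #[rho]%g = n &
       exists w : fps R, local_parameter w /\
         phi rho w = fps_mul (fps_const (xi_n R n)) w])
  \/
  (~ (forall g, is_C_linear (phi g)) /\
   exists (n : nat) (sigma rho : gT),
     [/\ [/\ (sigma ^+ 2 = 1)%g, (rho ^+ n = 1)%g,
             (sigma * rho * sigma^-1 = rho^-1)%g &
             <<[set sigma; rho]>>%g = [set: gT]],
         ([set: gT]%G \isog Grp (s : r : (s ^+ 2, r ^+ n, s * r * s^-1 = r^-1)))%g &
       exists w : fps R, local_parameter w /\
         [/\ forall a : R[i], phi sigma (fps_const a) = fps_const (conjc a),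
             phi sigma w = w,
             forall a : R[i], phi rho (fps_const a) = fps_const a &
             phi rho w = fps_mul (fps_const (xi_n R n)) w]]).
Proof.
have pa := phi_aut; have ph := phi_hom; have pi := phi_inj.
have [rho [hr crho orho Lr]] := rho_exists pa ph pi.
set n := #|HH phi| in crho orho Lr.
set xi := xi_n R n in Lr.
have n0 : (0 < n)%N by apply: HH_gt0.
have lin_in g : inH phi g -> is_C_linear (phi g).
  move=> hg c a; have [_ _ fM _ _] := pa g.
  by rewrite fM phi_const // eps_in.
have rho_eig : phi rho (w0 phi) = fps_mul (fps_const xi) (w0 phi).
  by rewrite w0_eig // Lr mul_constl.
case: (classic (forall g, is_C_linear (phi g))) => [lin | nlin].
  left; split=> //; exists n, rho; split=> //; last first.
    by exists (w0 phi); split=> //; apply: w0_lp.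
  rewrite crho; apply/setP => g; rewrite !inE /inH.
  have := lin g 'i%C (fps_one R); rewrite !mul_one => ->.
  have [_ _ _ f1 _] := pa g.
  by rewrite f1 mul_one /fps_one /fps_const /= eqxx.
right; split=> //.
have [sigma ns] : exists sigma, ~ is_C_linear (phi sigma).
  by apply: not_all_ex_not.
have hs : ~~ inH phi sigma by apply/negP => /lin_in.
set a := LL phi sigma.
have HGn : #|Group (Hgroup pa ph)| = n by [].
have hss : inH phi (sigma * sigma)%g by rewrite inH_mul // eqxx.
have Lss : LL phi (sigma * sigma)%g = conjc a * a by rewrite LL_mul // eps_out.
have aa : conjc a * a = 1.
  have e1 : (conjc a * a) ^+ n = 1.
    rewrite -Lss -LL_X // -HGn expg_cardG ?LL1 //.
    by rewrite inE.
  apply/eqP; rewrite -(pexpr_eq1 n0) ?e1 //.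
  by rewrite mulrC mulcJ_ge0.
have ss1 : (sigma * sigma = 1)%g by apply: LL_inj1 => //; rewrite Lss.
have sinv : (sigma^-1 = sigma)%g by apply/eqP; rewrite eq_invg_mul ss1.
have xiV : conjc xi = xi^-1.
  have := xi_conj R n; rewrite -/xi => e.
  by rewrite -[conjc xi]mul1r -(mulVf (x := xi)) ?mulrK' -?mulrA ?e ?mulr1 //;
    apply/eqP => x0; move: e; rewrite x0 mul0r => /eqP; rewrite eq_sym oner_eq0.
have hsr : ~~ inH phi (sigma * rho)%g by rewrite inH_mul // hr (negbTE hs).
have srs : (sigma * rho * sigma^-1 = rho^-1)%g.
  apply: LL_inj => //.
  - by rewrite inH_mul // inHV // (negbTE hsr) (negbTE hs).
  - by rewrite inHV.
  rewrite LL_mul // eps_out // sinv LL_mul // eps_out // LLV // -/a Lr.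
  by rewrite xiV mulrCA aa mulr1.
have rs : (rho * sigma = sigma * rho^-1)%g.
  by rewrite -srs sinv !mulgA ss1 mul1g.
set u := phi sigma (w0 phi).
have rho_u : phi rho u = fun k => xi * u k.
  rewrite /u phi_comp // rs -phi_comp // w0_eig ?inHV // phi_scale // eps_out //.
  by rewrite LLV // Lr -xiV conjcK.
set c : R[i] := if a == -1 then 'i%C else 1.
set v0 : fps R := fun k => c * w0 phi k.
set w := fps_add v0 (phi sigma v0).
have sig2 x : phi sigma (phi sigma x) = x by rewrite phi_comp // ss1 phi1.
have s2 : (sigma ^+ 2 = 1)%g by rewrite expgS expg1 ss1.
have rn : (rho ^+ n = 1)%g by rewrite -orho expg_order.
have gen : <<[set sigma; rho]>>%g = [set: gT].
  apply/eqP; rewrite eqEsubset subsetT /=; apply/subsetP => g _.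
  have sub : HH phi \subset <<[set sigma; rho]>>%g.
    by rewrite -crho cycle_subG; apply: mem_gen; rewrite !inE eqxx orbT.
  case hg : (inH phi g).
    by apply: (subsetP sub); rewrite inE hg.
  have hsg : (sigma * g)%g \in HH phi by rewrite inE inH_mul // hg (negbTE hs).
  rewrite -(mulKg sigma g) sinv; apply: groupM; last exact: (subsetP sub).
  by apply: mem_gen; rewrite !inE eqxx.
have card : #|[set: gT]| = n.*2.
  have e : ~: HH phi = (sigma *: HH phi)%g.
    apply/setP => g; rewrite inE mem_lcoset !inE inH_mul // inHV // (negbTE hs).
    by case: (inH phi g).
  by rewrite cardsT -(cardsC (HH phi)) e card_lcoset addnn.
exists n, sigma, rho; split.
- by [].
- exact: (dihedral_iso n0 s2 rn srs gen card).
exists w; split.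
  have cne : c + conjc c * a != 0.
    rewrite /c; case: (@eqP _ a (-1)) => [-> | ne].
      by apply/negP; rewrite eq_complex /= => /andP[_ /eqP e]; clear -e; lra.
    by rewrite rmorph1 mul1r addrC addr_eq0; apply/eqP.
  apply: lp_of.
    rewrite /w /fps_add /v0 w0_0 // mulr0 add0r (aut_m (pa sigma)) //.
    by rewrite /= w0_0 // mulr0.
  rewrite /w /fps_add (aut_lin1 (pa sigma) (phi_const pa sigma)) eps_out // -/a.
  rewrite /v0 w0_1 // rmorphM /= conjc_nat.
  rewrite -mulrA [_%:R * a]mulrC mulrA -mulrDl mulf_neq0 // pnatr_eq0 -lt0n.
  exact: n0.
split.
- by move=> z; rewrite phi_const // eps_out.
- have [_ fA _ _ _] := pa sigma.
  by rewrite /w fA sig2; apply: fps_ext => k; rewrite /fps_add addrC.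
- by move=> z; rewrite phi_const // eps_in.
have [_ fA _ _ _] := pa rho.
rewrite /w fA /v0 phi_scale // eps_in // rho_eig (phi_scale pa sigma) eps_out //.
rewrite phi_scale // eps_in // -/u rho_u mul_constl; apply: fps_ext => k.
rewrite /fps_add mul_constl /= -/xi; ring.
Qed.
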